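(* Let $\Psi$ be a family of real-valued functions with $\sup_{f\in\Psi}\mathrm{Var}[f(X)]\le\sigma^2$ for some $\sigma^2>0$, and let $\mathscr{X}=\{X^f:=m_f-\hat\mu_f:\ f\in\Psi\}$. There exist constants $C_1,C_2,C_3,C_4>0$ depending only on $\sigma^2$ such that the following holds. Let $\varepsilon\in(0,1)$ and suppose that (i) $\mathscr{X}$ is an exponential class whose bracketing covering numbers satisfy $N(\delta)\le C\exp(M\delta^{-p})$ for all $0<\delta\le n$, for some constants $C,M,p>0$ with $p\neq 2$; and (ii) writing $a=\frac{n^2\varepsilon}{C_2}\wedge\frac{n}{4}$, $$\frac{n^{3/2}\varepsilon^2}{C_1}\ \ge\ \Big\{\frac{2\sqrt M}{2-p}\Big(n^{1-\frac p2}-a^{1-\frac p2}\Big)+\sqrt{\log C}\,(n-a)\,\mathbf 1_{\{C>1\}}\Big\}\vee n^{1/2}.$$ Then $$\mathbb{P}\Big(\sup_{f\in\Psi}|m_f-\hat\mu_f|\ge n^2\varepsilon\Big)\le C_3\exp\Big(-\frac{n\varepsilon^2}{C_4}\Big),$$ where $\mathbb P$ is understood as outer probability if $\Psi$ is uncountable.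
   Context: $(X_i)_{i=1}^n$ are i.i.d. real random variables on $(\Omega,\mathcal F,\mathbb P)$, and $X$ is independent of them with the same distribution. For a real function $f$, $m_f=\mathbb E f(X)$. Let $\phi:\mathbb R\to\mathbb R$ be non-decreasing, differentiable, with $-\log(1-x+x^2/2)\le\phi(x)\le\log(1+x+x^2/2)$ for all $x$. For a parameter $\alpha>0$, set $\hat r_f(\mu)=\frac{1}{n\alpha}\sum_{i=1}^n\phi(\alpha(f(X_i)-\mu))$; Catoni's estimator $\hat\mu_f$ is a value (chosen arbitrarily if not unique) with $\hat r_f(\hat\mu_f)=0$. Standing assumption (used in the paper as a consequence of Catoni's deviation bound with suitable $\alpha$): for every $f\in\Psi$ and every $x>0$, $\mathbb P(|m_f-\hat\mu_f|\ge x)\le 2\exp\big(-\frac{nx^2}{2(\sigma^2+x^2)}\big)$. Distance: for $X^f,X^{f'}\in\mathscr X$, $d(X^f,X^{f'})=\|X^f-X^{f'}\|$, where $\|\cdot\|$ is the essential supremum norm on $\Omega$ (assumed finite on $\mathscr X$). Bracketing entropy: for $\delta>0$, $N(\delta)$ is the smallest $m$ such that there are pairs $[D_j^L,D_j^U]\in\mathscr X\times\mathscr X$, $j=1,\dots,m$, with the property that for each element $D\in\mathscr X$ there is $j$ with $D_j^L\le D\le D_j^U$ and $d(D_j^L,D_j^U)\le\delta$. $H(\delta)=\log N(\delta)$. $\mathscr X$ is called an exponential class if $N(\kappa)\le A\exp(B\kappa^{-r})$ for all $0<\kappa\le n$, for some constants $A,B,r>0$. *)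

(* Defs.v *)
From HB Require Import structures.
From mathcomp Require Import all_boot all_order all_algebra.
From mathcomp Require Import all_classical all_reals all_analysis.
From mathcomp Require Import ess_sup_inf.
Set Implicit Arguments. Unset Strict Implicit. Unset Printing Implicit Defensive.
Import Order.TTheory GRing.Theory Num.Def Num.Theory.
Import numFieldNormedType.Exports.
Local Open Scope classical_set_scope.
Local Open Scope ring_scope.

Section defs.
Context {d : measure_display} {T : measurableType d} {R : realType}.
Variable P : probability T R.

Definition outerP (A : set T) : \bar R :=
  ereal_inf [set P B | B in [set B | measurable B /\ A `<=` B]].

Definition mutually_independent (I : finType) (Z : I -> T -> R) : Prop :=
  forall B : I -> set R, (forall i, measurable (B i)) ->
    P (\bigcap_i (Z i @^-1` B i)) = (\prod_(i : I) P (Z i @^-1` B i))%E.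

Definition same_distribution (Y Z : T -> R) : Prop :=
  forall B : set R, measurable B -> P (Y @^-1` B) = P (Z @^-1` B).

Definition mean_of (X : T -> R) (f : R -> R) : R := fine ('E_P[f \o X])%E.

Definition catoni_r (n : nat) (Xs : 'I_n -> T -> R) (phi : R -> R) (alpha : R)
  (f : R -> R) (w : T) (mu : R) : R :=
  (n%:R * alpha)^-1 * \sum_(i < n) phi (alpha * (f (Xs i w) - mu)).

Definition Xclass (X : T -> R) (Psi : set (R -> R)) (muhat : (R -> R) -> T -> R)
  : set (T -> R) :=
  [set (fun w => mean_of X f - muhat f w) | f in Psi].

Definition dist_ess (D D' : T -> R) : \bar R :=
  ess_sup P (fun w => (`|D w - D' w|)%:E).

Definition bracket_cover (Xc : set (T -> R)) (delta : R) (m : nat) : Prop :=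
  exists L U : nat -> T -> R,
    (forall j, (j < m)%N -> Xc (L j) /\ Xc (U j) /\ (dist_ess (U j) (L j) <= delta%:E)%E) /\
    (forall D, Xc D -> exists j, (j < m)%N /\ forall w, L j w <= D w <= U j w).

(* bracketing number N(delta) (= +oo if no finite bracketing exists) *)
Definition bracketing_number (Xc : set (T -> R)) (delta : R) : \bar R :=
  ereal_inf [set (m%:R)%:E | m in [set m | bracket_cover Xc delta m]].

End defs.

(* Main.v *)
Require Import Defs.
From HB Require Import structures.
From mathcomp Require Import all_boot all_order all_algebra.
From mathcomp Require Import all_classical all_reals all_analysis.
From mathcomp Require Import ring lra.
Import Order.TTheory GRing.Theory Num.Def Num.Theory.
Import numFieldNormedType.Exports.
Local Open Scope classical_set_scope.
Local Open Scope ring_scope.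

Lemma powRE (R : realType) (a x : R) : 0 < a -> a `^ x = expR (x * ln a).
Proof. by move=> a0; rewrite /powR gt_eqF. Qed.

Lemma param_bound (R : realType) (N e M p C C1 C2 : R) :
  1 <= N -> 0 < e < 1 -> 0 < M -> 0 < p -> p != 2 -> 0 < C -> 0 < C2 -> 10 <= C1 ->
    (let a := Num.min (N ^+ 2 * e / C2) (N / 4) in
     Num.max (2 * Num.sqrt M / (2 - p) * (N `^ (1 - p / 2) - a `^ (1 - p / 2))
              + (if 1 < C then Num.sqrt (ln C) * (N - a) else 0))
             (N `^ (1 / 2))
     <= N `^ (3 / 2) * e ^+ 2 / C1) ->
  C1 <= N * e ^+ 2 /\ C * expR (M * N `^ (- p)) <= expR (N * e ^+ 2 / 8).
Proof.
move=> N1 /andP[e0 e1] M0 p0 p2 C0 C20 C1g /=.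
set a := Num.min _ _.
have N0 : 0 < N by lra.
have a0 : 0 < a by rewrite lt_min; apply/andP; split; [apply: divr_gt0 => //; apply: mulr_gt0 => //; apply: exprn_gt0|]; lra.
have aN : a <= N / 4 by rewrite ge_min lexx orbT.
set L := ln N.
have EN : expR L = N by rewrite /L lnK // posrE.
set s := expR (L / 2).
set w := expR (- (p / 2) * L).
have s0 : 0 < s by apply: expR_gt0.
have w0 : 0 < w by apply: expR_gt0.
have ss : s * s = N by rewrite /s -expRD -EN; congr expR; field.
have P32 : N `^ (3 / 2) = N * s by rewrite powRE // -/L /s -[in X in _ = X]EN -expRD; congr expR; rewrite -/L; field.
have P12 : N `^ (1 / 2) = s by rewrite powRE // /s; congr expR; rewrite -/L; field.
set q := 1 - p / 2.
have Pq : N `^ q = N * w by rewrite powRE // -/L /w -[in X in _ = X]EN -expRD; congr expR; rewrite -/L /q; field.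
have Pp : N `^ (- p) = w * w by rewrite powRE // /w -expRD; congr expR; rewrite -/L; field.
set D := ln a - L.
have D34 : D <= - (3 / 4).
  have -> : D = ln (1 + (a / N - 1)) by rewrite addrC subrK /D /L ln_div ?posrE.
  apply: le_trans (le_ln1Dx _) _.
    have : 0 < a / N by apply: divr_gt0.
    lra.
  have : a / N <= 1 / 4 by rewrite ler_pdivrMr // ; lra.
  lra.
set rho := expR (q * D).
have rho0 : 0 < rho by apply: expR_gt0.
have Paq : a `^ q = N * w * rho.
  by rewrite powRE // -Pq powRE // /rho -expRD; congr expR; rewrite /D /L; ring.
set t := 2 / (2 - p) * (1 - rho).
have t13 : 1 / 3 <= t.
  have p2' : 2 - p != 0 by rewrite subr_eq0 eq_sym.
  have Et : (2 - p) * t = 2 * (1 - rho) by rewrite /t; field.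
  have [pl2|pg2] := ltrP p 2.
    have h1 := expR_ge1Dx (- (q * D)).
    have h2 : rho * expR (- (q * D)) = 1 by rewrite /rho expRxMexpNx_1.
    have hq : 0 < q < 1 by rewrite /q; lra.
    have hA : rho * (1 - q * D) <= 1.
      rewrite -h2; apply: ler_wpM2l; [lra| lra].
    have hX : 0 <= (- D - 3 / 4) * (1 - q / 3) by apply: mulr_ge0; lra.
    have hY : 0 <= q * (- D * (1 - q / 3) - 1 / 3) by apply: mulr_ge0; lra.
    have hB : 1 <= (1 - q / 3) * (1 - q * D).
      have -> : (1 - q / 3) * (1 - q * D) = 1 + q * (- D * (1 - q / 3) - 1 / 3) by field.
      lra.
    have hC : 0 < 1 - q * D by nra.
    have hr : rho <= 1 - q / 3.
      rewrite -(ler_pM2r hC); lra.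
    have : 0 < 2 - p by lra.
    move=> hp; rewrite -(ler_pM2l hp) Et; rewrite /q in hr; lra.
  have pg2' : 2 < p by rewrite lt_neqAle eq_sym p2.
  have h1 := expR_ge1Dx (q * D).
  have hq : q < 0 by rewrite /q; lra.
  have hr : 1 + q * D <= rho by [].
  have : 0 < p - 2 by lra.
  move=> hp.
  have Et' : (p - 2) * t = 2 * (rho - 1) by lra.
  rewrite -(ler_pM2l hp) Et'.
  rewrite /q in hr hq; nra.
have T1E : 2 * Num.sqrt M / (2 - p) * (N `^ q - a `^ q) = Num.sqrt M * (N * w) * t.
  by rewrite Pq Paq /t; field; rewrite subr_eq0 eq_sym.
rewrite -/q T1E P12 P32.
set sm := Num.sqrt M.
have sm0 : 0 <= sm by apply: sqrtr_ge0.
have smM : sm * sm = M by rewrite -expr2 sqr_sqrtr // ltW.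
set z := s * e ^+ 2 / C1.
have C10 : 0 < C1 by lra.
have z0 : 0 <= z by rewrite /z; apply: divr_ge0; [apply: mulr_ge0; [lra | apply: sqr_ge0] | lra].
have RHS : N * s * e ^+ 2 / C1 = N * z by rewrite /z; field; lra.
rewrite RHS.
set T2 := (if 1 < C then _ else _).
have T20 : 0 <= T2.
  rewrite /T2; case: ifP => // _; apply: mulr_ge0; first exact: sqrtr_ge0.
  lra.
have T10 : 0 <= sm * (N * w) * t by apply: mulr_ge0; [apply: mulr_ge0 => //; apply: mulr_ge0; lra| lra].
rewrite ge_max => /andP[HT Hs].
have ee : e ^+ 2 <= 1 by rewrite expr2; nra.
have ee0 : 0 < e ^+ 2 by apply: exprn_gt0.
have zz : z * z <= N * e ^+ 2 / 100.
  have -> : z * z = N * (e ^+ 2 * e ^+ 2) / (C1 * C1) by rewrite /z -ss; field; lra.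
  rewrite ler_pdivrMr; last nra.
  have : N * (e ^+ 2 * e ^+ 2) <= N * e ^+ 2 by rewrite ler_pM2l // ger_pMr.
  have : 100 <= C1 * C1 by nra.
  move=> h100 h1.
  have : 0 <= N * e ^+ 2 * (C1 * C1 / 100 - 1) by apply: mulr_ge0; [apply: mulr_ge0; lra | lra].
  have -> : N * e ^+ 2 * (C1 * C1 / 100 - 1) = N * e ^+ 2 / 100 * (C1 * C1) - N * e ^+ 2 by field.
  lra.
split.
  have : s <= s * (N * e ^+ 2 / C1) by rewrite mulrCA -mulrA (mulrC s) -mulrA (mulrC _ s) mulrA; move: Hs; rewrite /z; congr (_ <= _); field; lra.
  rewrite ler_pMr // ler_pdivlMr //; lra.
have HM : M * (w * w) <= 9 * (z * z).
  have h : sm * w * t <= z.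
    have : N * (sm * w * t) <= N * z by lra.
    by rewrite ler_pM2l.
  have h2 : sm * w <= 3 * z.
    have : sm * w * (1/3) <= sm * w * t by rewrite ler_wpM2l //; apply: mulr_ge0 => //; lra.
    lra.
  rewrite -smM; have : 0 <= sm * w by apply: mulr_ge0 => //; lra.
  nra.
rewrite Pp.
have Cb : C <= expR (if 1 < C then ln C else 0).
  case: ifP => hC; first by rewrite lnK // posrE.
  by rewrite expR0; move/negbT: hC; rewrite -leNgt.
have Gb : (if 1 < C then ln C else 0) <= 2 * (z * z).
  case: ifP => hC; last by nra.
  have hT2 : Num.sqrt (ln C) * (N - a) <= N * z by move: HT; rewrite /T2 hC; lra.
  have lC0 : 0 <= ln C by apply: ln_ge0; lra.
  set sc := Num.sqrt (ln C) in hT2.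
  have sc0 : 0 <= sc by apply: sqrtr_ge0.
  have scc : sc * sc = ln C by rewrite -expr2 sqr_sqrtr.
  have : sc * (3 * N / 4) <= N * z.
    apply: le_trans hT2; apply: ler_wpM2l => //; lra.
  move=> h.
  have : sc * 3 / 4 <= z.
    have : N * (sc * 3 / 4) <= N * z by lra.
    by rewrite ler_pM2l.
  move=> h'; rewrite -scc; have : sc * sc <= (4 / 3 * z) * (4 / 3 * z) by apply: ler_pM => //; lra.
  have : 0 <= z * z by apply: mulr_ge0.
  nra.
apply: le_trans (ler_wpM2r (ltW (expR_gt0 _)) Cb) _.
rewrite -expRD ler_expR; apply: le_trans (lerD Gb HM) _; move: zz; clearbody z; have : 0 <= N * e ^+ 2 by apply: mulr_ge0; lra.
lra.
Qed.

Lemma fin_bound (R : realType) (m : nat) (F : nat -> R) (x : R) : 0 < x ->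
  (forall j, (j < m)%N -> F j < x) ->
  exists2 Mx, Mx < x & forall j, (j < m)%N -> F j <= Mx.
Proof.
move=> x0; elim: m => [|m IH] H; first by exists 0.
have [Mx h1 h2] : exists2 Mx, Mx < x & forall j, (j < m)%N -> F j <= Mx.
  by apply: IH => j hj; apply: H; rewrite ltnS ltnW.
exists (Num.max Mx (F m)); first by rewrite gt_max h1 H.
move=> j; rewrite ltnS leq_eqVlt => /orP[/eqP -> | hj]; rewrite le_max ?lexx ?orbT //.
by rewrite h2.
Qed.

Lemma outer_key (d : measure_display) (T : measurableType d) (R : realType)
  (P : probability T R) (A : nat -> set T) (b e : R) (K : nat) : 0 < e ->
  (forall k, (k < K)%N -> (outerP P (A k) <= b%:E)%E) ->
  exists B, [/\ measurable B, [set w | exists k, (k < K)%N /\ A k w] `<=` B &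
    (P B <= (K%:R * (b + e))%:E)%E].
Proof.
move=> e0; elim: K => [|K IH] H.
  exists set0; split => //; first by move=> w [k []].
  by rewrite measure0 mul0r.
have [B1 [mB1 sB1 PB1]] : exists B, [/\ measurable B,
    [set w | exists k, (k < K)%N /\ A k w] `<=` B & (P B <= (K%:R * (b + e))%:E)%E].
  by apply: IH => k hk; apply: H; rewrite ltnS ltnW.
have : (outerP P (A K) < (b + e)%:E)%E.
  by apply: le_lt_trans (H K (ltnSn K)) _; rewrite lte_fin; lra.
move/ereal_inf_lt => [y [B2 [mB2 sB2] <-] PB2].
exists (B1 `|` B2); split; first exact: measurableU.
  move=> w [k [hk Ak]]; move: hk; rewrite ltnS leq_eqVlt => /orP[/eqP Ek | hk].
    by right; apply: sB2; rewrite -Ek.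
  by left; apply: sB1; exists k.
apply: le_trans (measureU2 _ mB1 mB2) _.
rewrite -natr1 mulrDl mul1r EFinD; apply: leeD => //; exact: ltW.
Qed.

Lemma outer_fin (d : measure_display) (T : measurableType d) (R : realType)
  (P : probability T R) (A : nat -> set T) (b : R) (K : nat) :
  (forall k, (k < K)%N -> (outerP P (A k) <= b%:E)%E) ->
  forall S, S `<=` [set w | exists k, (k < K)%N /\ A k w] ->
  (outerP P S <= (K%:R * b)%:E)%E.
Proof.
move=> H S HS; apply/lee_addgt0Pr => e e0.
have e'0 : 0 < e / (K%:R + 1) by apply: divr_gt0 => //; rewrite ltr_wpDl.
have [B [mB sB PB]] := @outer_key _ _ _ P _ _ _ _ e'0 H.
apply: le_trans (ereal_inf_lbound _) _.
  by exists B => //; split => //; apply: subset_trans sB.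
apply: le_trans PB _; rewrite -EFinD lee_fin mulrDr lerD2l.
have K0 : 0 <= K%:R :> R by [].
have -> : K%:R * (e / (K%:R + 1)) = e - e / (K%:R + 1).
  by field; apply/lt0r_neq0; rewrite ltr_wpDl.
lra.
Qed.

Lemma final_real (R : realType) (N eps sigma2 m B0 : R) : 1 <= N -> 0 < eps < 1 ->
  0 < sigma2 -> sigma2 + 10 <= N * eps ^+ 2 -> B0 <= expR (N * eps ^+ 2 / 8) ->
  0 <= m -> m < B0 + 1 ->
  (2 * m) * (2 * expR (- (N * (N ^+ 2 * eps) ^+ 2) / (2 * (sigma2 + (N ^+ 2 * eps) ^+ 2))))
    <= 8 * expR (- (N * eps ^+ 2) / 8).
Proof.
move=> N1 /andP[e0 e1] s0 HC1 HB m0 hm.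
have N0 : 0 < N by lra.
set x := N ^+ 2 * eps.
have ee : eps ^+ 2 <= 1 by rewrite expr2; nra.
have Y0 : 0 <= N * eps ^+ 2 by apply: mulr_ge0; [lra| apply: sqr_ge0].
have hx2 : sigma2 <= x ^+ 2.
  have : N * eps ^+ 2 <= x ^+ 2.
    rewrite /x exprMn -exprM.
    rewrite ler_pM2r ?exprn_gt0 //.
    by rewrite -[X in X <= _]expr1; apply: ler_weXn2l.
  lra.
have hE : expR (- (N * x ^+ 2) / (2 * (sigma2 + x ^+ 2))) <= expR (- (N / 4)).
  have hsx : 0 < 2 * (sigma2 + x ^+ 2) by have := sqr_ge0 x; lra.
  rewrite ler_expR mulNr lerN2 ler_pdivlMr //.
  nra.
set E := expR (- (N * x ^+ 2) / (2 * (sigma2 + x ^+ 2))) in hE *.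
set G := expR (N * eps ^+ 2 / 8) in HB.
set F := expR (- (N / 4)) in hE.
have G1 : 1 <= G by rewrite /G -expR0 ler_expR; apply: divr_ge0 => //; lra.
have E0 : 0 <= E by apply: expR_ge0.
have GF : G * F <= expR (- (N * eps ^+ 2) / 8).
  rewrite /G /F -expRD ler_expR mulNr.
  have : N * eps ^+ 2 <= N by rewrite ger_pMr.
  lra.
have hmE : m * E <= (2 * G) * F by apply: ler_pM => //; lra.
lra.
Qed.

Theorem theorem2 (R : realType) (sigma2 : R) : 0 < sigma2 ->
  exists C1 C2 C3 C4 : R, [/\ 0 < C1, 0 < C2, 0 < C3 & 0 < C4] /\
  forall (d : measure_display) (T : measurableType d) (P : probability T R)
    (n : nat) (Xs : 'I_n -> T -> R) (X : T -> R)
    (Psi : set (R -> R)) (phi : R -> R) (alpha : R)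
    (muhat : (R -> R) -> T -> R) (eps C M p : R),
    (0 < n)%N ->
    (* X_1..X_n i.i.d. real random variables, X independent of them, same law *)
    (forall i, measurable_fun setT (Xs i)) -> measurable_fun setT X ->
    mutually_independent P
      (fun o : option 'I_n => match o with Some i => Xs i | None => X end) ->
    (forall i, same_distribution P (Xs i) X) ->
    (* variance bound on Psi *)
    (forall f, Psi f -> (f \o X) \in Lfun P 2%:E /\ ('V_P[f \o X] <= sigma2%:E)%E) ->
    (* Catoni's estimator *)
    {homo phi : x y / x <= y} -> (forall x, derivable phi x 1) ->
    (forall x, - ln (1 - x + x ^+ 2 / 2) <= phi x <= ln (1 + x + x ^+ 2 / 2)) ->
    0 < alpha ->
    (forall f, Psi f -> forall w, catoni_r Xs phi alpha f w (muhat f w) = 0) ->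
    (* standing deviation assumption *)
    (forall f, Psi f -> forall x : R, 0 < x ->
       (outerP P [set w | (x <= `|mean_of P X f - muhat f w|)%R]
         <= (2 * expR (- (n%:R * x ^+ 2) / (2 * (sigma2 + x ^+ 2))))%:E)%E) ->
    (* the essential-supremum distance is finite on the class *)
    (forall D D', Xclass P X Psi muhat D -> Xclass P X Psi muhat D' ->
       (dist_ess P D D' < +oo)%E) ->
    0 < eps < 1 ->
    (* (i) exponential class with constants C, M, p, p <> 2 *)
    0 < C -> 0 < M -> 0 < p -> p != 2 ->
    (forall delta, 0 < delta <= n%:R ->
       (bracketing_number P (Xclass P X Psi muhat) delta
         <= (C * expR (M * delta `^ (- p)))%:E)%E) ->
    (* (ii) *)
    (let a := Num.min (n%:R ^+ 2 * eps / C2) (n%:R / 4) in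
     Num.max (2 * Num.sqrt M / (2 - p) * (n%:R `^ (1 - p / 2) - a `^ (1 - p / 2))
              + (if 1 < C then Num.sqrt (ln C) * (n%:R - a) else 0))
             (n%:R `^ (1 / 2))
     <= n%:R `^ (3 / 2) * eps ^+ 2 / C1) ->
    (outerP P [set w | (n%:R ^+ 2 * eps)%:E <=
        ereal_sup [set (`|mean_of P X f - muhat f w|)%:E | f in Psi]]
      <= (C3 * expR (- (n%:R * eps ^+ 2) / C4))%:E)%E.
Proof.
move=> s0; exists (sigma2 + 10), 1, 8, 8; split; first by split; lra.
move=> d T P n Xs X Psi phi alpha muhat eps C M p n0 _ _ _ _ _ _ _ _ _ _ Hdev _
  epsH C0 M0 p0 p2 Hbr Hii.
set N := n%:R : R.
have N1 : 1 <= N by rewrite /N ler1n.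
have N0 : 0 < N by lra.
have [e0 e1] : 0 < eps /\ eps < 1 by move/andP: epsH.
have [HC1 HB] := @param_bound R N eps M p C (sigma2 + 10) 1 N1 epsH M0 p0 p2 C0 ltr01
  ltac:(lra) Hii.
set B0 := C * expR (M * N `^ (- p)) in HB.
have : (bracketing_number P (Xclass P X Psi muhat) N < (B0 + 1)%:E)%E.
  apply: le_lt_trans (Hbr N _) _; first by apply/andP; split; lra.
  by rewrite lte_fin /B0; lra.
move/ereal_inf_lt => [y [m Hm <-]]; rewrite lte_fin => hm.
case: Hm => L [U [HLU Hcov]].
set x := N ^+ 2 * eps.
have x0 : 0 < x by rewrite /x; apply: mulr_gt0 => //; apply: exprn_gt0.
set b := 2 * expR (- (N * x ^+ 2) / (2 * (sigma2 + x ^+ 2))).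
pose A k := [set w | x <= `|(if odd k then U else L) k./2 w|].
have HA : forall k, (k < m.*2)%N -> (outerP P (A k) <= b%:E)%E.
  move=> k hk.
  have hj : (k./2 < m)%N by rewrite ltn_half_double.
  have [hL [hU _]] := HLU _ hj.
  have [f Pf Ef] : Xclass P X Psi muhat ((if odd k then U else L) k./2).
    by case: (odd k).
  rewrite /A -Ef /=.
  exact: Hdev f Pf x x0.
have Hout := @outer_fin _ _ _ P A b (m.*2) HA.
apply: le_trans (Hout _ _) _.
  move=> w Hw; apply: contrapT => Hn.
  have Hall : forall j, (j < m)%N -> Num.max `|L j w| `|U j w| < x.
    move=> j hj; rewrite ltNge; apply/negP => hx; apply: Hn.
    move: hx; rewrite le_max => /orP[hx|hx].
      exists j.*2; split; first by rewrite ltn_double.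
      by rewrite /A /= odd_double doubleK.
    exists j.*2.+1; split; first by rewrite -ltn_half_double /= uphalf_double.
    by rewrite /A /= odd_double /= uphalf_double.
  have [Mx hMx hle] := @fin_bound R m (fun j => Num.max `|L j w| `|U j w|) x x0 Hall.
  have : (ereal_sup [set (`|mean_of P X f - muhat f w|)%:E | f in Psi] <= Mx%:E)%E.
    apply: ge_ereal_sup => _ [f Pf <-]; rewrite lee_fin.
    have [j [hj hLU]] := Hcov (fun w => mean_of P X f - muhat f w) (ex_intro2 _ _ f Pf erefl).
    have := hle j hj; rewrite ge_max => /andP[hl hu].
    move: (hLU w) => /andP[h1 h2].
    move/ler_normlP: hl => [hl1 hl2]; move/ler_normlP: hu => [hu1 hu2].
    rewrite ler_norml; apply/andP; split; lra.
  move=> hs; move: (le_trans Hw hs); rewrite lee_fin; lra.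
rewrite lee_fin -mul2n natrM.
exact: (@final_real R N eps sigma2 m%:R B0 N1 epsH s0 HC1 HB (ler0n _ _) hm).
Qed.
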